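(* Let $m\ge2$ and let $\mathcal{C}\in\mathbb{S}_{m,n}$ be a symmetric Cauchy tensor with generating vector $c=(c_1,\dots,c_n)^T$. The following are equivalent: (i) $\mathcal{C}$ is completely positive; (ii) $\mathcal{C}$ is strictly copositive; (iii) $c>0$ (all $c_i>0$); (iv) the function $f_{\mathcal{C}}(x)=\mathcal{C}x^m$ is strictly monotonically increasing on $\mathbb{R}^n_+$, i.e. $f_{\mathcal{C}}(x)>f_{\mathcal{C}}(y)$ whenever $x,y\in\mathbb{R}^n_+$, $x\ge y$ entrywise and $x\ne y$; (v) $\mathcal{C}$ is doubly nonnegative.
   Context: Given $c\in\mathbb{R}^n$ with $c_i\ne0$ for all $i$ and $c_{i_1}+\dots+c_{i_m}\ne0$ for all $i_1,\dots,i_m\in[n]$, the symmetric Cauchy tensor with generating vector $c$ is $\mathcal{C}=(c_{i_1\ldots i_m})$ with $c_{i_1\ldots i_m}=1/(c_{i_1}+\dots+c_{i_m})$. $\mathcal{A}x^m=\sum a_{i_1\ldots i_m}x_{i_1}\cdots x_{i_m}$; $(\mathcal{A}x^{m-1})_i=\sum_{i_2,\dots,i_m}a_{ii_2\ldots i_m}x_{i_2}\cdots x_{i_m}$; an H-eigenvalue is $\lambda\in\mathbb{R}$ with $\mathcal{A}x^{m-1}=\lambda(x_i^{m-1})_i$ for some nonzero real $x$. Completely positive: $\mathcal{A}=\sum_{k=1}^r(u^{(k)})^m$ with $u^{(k)}\in\mathbb{R}^n_+$, where $(u^m)_{i_1\ldots i_m}=u_{i_1}\cdots u_{i_m}$.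 Strictly copositive: $\mathcal{A}x^m>0$ for all $x\in\mathbb{R}^n_+\setminus\{0\}$. Doubly nonnegative: all entries and all H-eigenvalues nonnegative. *)

(* Defs.v *)
From Stdlib Require Import Reals.
From mathcomp Require Import all_boot.
Set Implicit Arguments. Unset Strict Implicit. Unset Printing Implicit Defensive.

Local Open Scope R_scope.

Definition vec (n : nat) := 'I_n -> R.
(* A real tensor of order m and dimension n: entries indexed by
   (i_1,...,i_m) in [n]^m, encoded as a finite function 'I_m -> 'I_n. *)
Definition tensor (m n : nat) := {ffun 'I_m -> 'I_n} -> R.


Definition idx_sum (m n : nat) (c : vec n) (idx : {ffun 'I_m -> 'I_n}) : R :=
  \big[Rplus/0]_(k < m) c (idx k).

Definition cauchy_generating (m n : nat) (c : vec n) : Prop :=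
  (forall i : 'I_n, c i <> 0) /\
  (forall idx : {ffun 'I_m -> 'I_n}, idx_sum c idx <> 0).
Arguments cauchy_generating m {n} c.

Definition cauchy_tensor (m n : nat) (c : vec n) : tensor m n :=
  fun idx => / idx_sum c idx.
Arguments cauchy_tensor m {n} c _.

Definition tpow (m n : nat) (A : tensor m n) (x : vec n) : R :=
  \big[Rplus/0]_(idx : {ffun 'I_m -> 'I_n})
     (A idx * \big[Rmult/1]_(k < m) x (idx k)).

(* (A x^{m-1})_i : sum over (i_2..i_m) of a_{i i_2 ... i_m} x_{i_2}...x_{i_m};
   the first index position is the one with val k = 0. *)
Definition tpow1 (m n : nat) (A : tensor m n) (x : vec n) (i : 'I_n) : R :=
  \big[Rplus/0]_(idx : {ffun 'I_m -> 'I_n}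
                 | [forall k : 'I_m, (val k == 0%N) ==> (idx k == i)])
     (A idx * \big[Rmult/1]_(k < m | val k != 0%N) x (idx k)).

Definition H_eigenvalue (m n : nat) (A : tensor m n) (lam : R) : Prop :=
  exists x : vec n, (exists i, x i <> 0) /\
    forall i : 'I_n, tpow1 A x i = lam * x i ^ (m - 1).

Definition rank_one (m n : nat) (u : vec n) : tensor m n :=
  fun idx => \big[Rmult/1]_(k < m) u (idx k).
Arguments rank_one m {n} u _.

Definition completely_positive (m n : nat) (A : tensor m n) : Prop :=
  exists (r : nat) (u : 'I_r -> vec n),
    (forall k i, 0 <= u k i) /\
    forall idx, A idx = \big[Rplus/0]_(k < r) rank_one m (u k) idx.

Definition nonneg_vec (n : nat) (x : vec n) : Prop := forall i, 0 <= x i.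

Definition strictly_copositive (m n : nat) (A : tensor m n) : Prop :=
  forall x : vec n, nonneg_vec x -> (exists i, x i <> 0) -> 0 < tpow A x.

Definition strictly_increasing_on_nonneg (m n : nat) (A : tensor m n) : Prop :=
  forall x y : vec n, nonneg_vec x -> nonneg_vec y ->
    (forall i, y i <= x i) -> (exists i, x i <> y i) ->
    tpow A y < tpow A x.

Definition doubly_nonnegative (m n : nat) (A : tensor m n) : Prop :=
  (forall idx, 0 <= A idx) /\ (forall lam, H_eigenvalue A lam -> 0 <= lam).

(* Main.v *)
Require Import Defs.
From Stdlib Require Import Reals Lra Lia.
From Coquelicot Require Import Coquelicot.
From mathcomp Require Import all_boot all_order all_algebra.
From mathcomp Require Import Rstruct.
From mathcomp Require Import zify.
Import Order.TTheory GRing.Theory Num.Theory.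

Section Ana.
Local Open Scope R_scope.

Lemma mono0 (g g' : R -> R) x : 0 <= x -> g 0 = 0 ->
  (forall t, derivable_pt_lim g t (g' t)) -> (forall t, 0 <= t -> 0 <= g' t) -> 0 <= g x.
Proof.
intros hx h0 hd hp. destruct (Req_dec x 0) as [->|nz]; [lra|].
destruct (MVT_cor2 g g' 0 x) as [c [e hc]]; [lra| intros; apply hd|].
rewrite h0 in e. assert (0 <= g' c) by (apply hp; lra). nra.
Qed.

Lemma exp_ub x : 0 <= x -> exp (-x) <= 1 - x + x^2/2.
Proof.
intro hx.
assert (H := mono0 (fun t => 1 - t + t^2/2 - exp(-t)) (fun t => -1 + t + exp(-t)) x hx).
enough (0 <= 1 - x + x ^ 2 / 2 - exp (- x)) by lra.
apply H; clear H.
- rewrite Ropp_0 exp_0. lra.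
- intro t. apply is_derive_Reals. auto_derive; auto. field.
- intros t ht. pose proof (exp_ineq1_le (-t)). lra.
Qed.

Lemma exp_lb x : 0 <= x -> 1 - x + x^2/2 - x^3/6 <= exp (-x).
Proof.
intro hx.
enough (0 <= exp(-x) - (1 - x + x^2/2 - x^3/6)) by lra.
apply (mono0 (fun t => exp(-t) - (1 - t + t^2/2 - t^3/6)) (fun t => - exp(-t) + 1 - t + t^2/2) x hx).
- rewrite Ropp_0 exp_0. lra.
- intro t. apply is_derive_Reals. auto_derive; auto. field.
- intros t ht. pose proof (exp_ub t ht). lra.
Qed.

Lemma phi_bound x : 0 < x <= 1 ->
  0 <= / (1 - exp (-x)) - / x - / 2 <= x / 2 /\ x / 2 <= 1 - exp (-x).
Proof.
intro hx. pose proof (exp_ub x ltac:(lra)). pose proof (exp_lb x ltac:(lra)).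
set (w := exp (-x)) in *.
assert (hD : x/2 <= 1 - w) by nra.
assert (hN0 : 0 <= (x+2)*w + x - 2) by nra.
assert (hN1 : (x+2)*w + x - 2 <= x^3/2) by nra.
assert (e : / (1 - w) - / x - / 2 = ((x+2)*w + x - 2) / (2 * x * (1 - w))) by (field; lra).
rewrite e. split; [split|lra].
- apply Rdiv_le_0_compat; [lra| nra].
- apply Rmult_le_reg_r with (2 * x * (1-w)); [nra|].
  unfold Rdiv. rewrite Rmult_assoc Rinv_l; [|nra]. nra.
Qed.
End Ana.
Section Lag.
Set Implicit Arguments.
Local Open Scope ring_scope.

Lemma lagrange_ex (N : nat) (z : 'I_N -> R) : injective z ->
  exists ell : 'I_N -> {poly R}, (forall j, (size (ell j) <= N)%N) /\
    (forall j l, (ell j).[z l] = (j == l)%:R).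
Proof.
move=> zi.
pose p j := \prod_(l | l != j) ('X - (z l)%:P).
exists (fun j => ((p j).[z j]^-1)%:P * p j); split.
  move=> j; have jN := ltn_ord j.
  apply: leq_trans (size_mul_leq _ _) _.
  have h1 := size_polyC_leq1 ((p j).[z j]^-1).
  have h2 := size_poly_prod_leq (predC1 j) (fun l => 'X - (z l)%:P).
  rewrite (eq_bigr (fun _ => 2%N)) in h2; last by move=> l _; rewrite size_XsubC.
  rewrite sum_nat_const cardC1 card_ord in h2.
  move: h1 h2; rewrite /p.
  set A := size _; set B := size _ => h1 h2.
  lia.
move=> j l; rewrite hornerM hornerC.
have [<-|neq] := altP eqP.
  rewrite mulVf // /p horner_prod; apply/prodf_neq0 => k nk.
  by rewrite hornerXsubC subr_eq0 (inj_eq zi) eq_sym.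
rewrite /p [X in _ * X]horner_prod [X in _ * X](bigD1 l) 1?eq_sym //=.
by rewrite hornerXsubC subrr mul0r mulr0.
Qed.


Lemma interp (N : nat) (z : 'I_N -> R) : injective z ->
  exists Cst : R, 0 < Cst /\ forall E : 'I_N -> R, exists a : nat -> R,
    (forall l, \sum_(i < N) a i * z l ^+ i = E l) /\
    (forall B, 0 <= B -> (forall j, `|E j| <= B) -> forall i, (i < N)%N -> `|a i| <= Cst * B).
Proof.
move=> /lagrange_ex [ell [hs hv]].
exists (1 + \sum_j \sum_(i < N) `|(ell j)`_i|); split.
  apply: ltr_wpDr; last exact: ltr01.
  by apply: sumr_ge0 => j _; apply: sumr_ge0.
move=> E; exists (fun i => \sum_j E j * (ell j)`_i); split.
  move=> l.
  under eq_bigr do rewrite mulr_suml.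
  rewrite exchange_big /=.
  under eq_bigr do (under eq_bigr do rewrite -mulrA; rewrite -mulr_sumr -horner_coef_wide // hv).
  rewrite (bigD1 l) //= eqxx mulr1 big1 ?addr0 // => j /negbTE ->.
  by rewrite mulr0.
move=> B B0 hB i hi.
apply: le_trans (ler_norm_sum _ _ _) _.
have h : \sum_j `|E j * (ell j)`_i| <= \sum_j B * `|(ell j)`_i|.
  by apply: ler_sum => j _; rewrite normrM ler_wpM2r.
apply: le_trans h _.
rewrite -mulr_sumr mulrC ler_wpM2r //.
apply: ler_wpDl; first exact: ler01.
apply: ler_sum => j _.
rewrite (bigD1 (Ordinal hi)) //= ler_wpDr //.
by apply: sumr_ge0.
Qed.

End Lag.

Section Key.
Local Open Scope R_scope.

Lemma geom (q : R) n : \big[Rplus/0]_(i < n) q ^ i * (1 - q) = 1 - q ^ n.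
Proof.
elim: n => [|n IH]; first by rewrite big_ord0 /=; ring.
rewrite big_ord_recr /= Rmult_plus_distr_r IH; ring.
Qed.

Lemma exp_nat_mul (i : nat) s : exp (- (INR i * s)) = exp (- s) ^ i.
Proof.
elim: i => [|i IH]; first by rewrite /= Rmult_0_l Ropp_0 exp_0.
rewrite S_INR /= -IH -exp_plus; f_equal; ring.
Qed.

Lemma exprE (x : R) n : (x ^+ n)%R = x ^ n.
Proof. elim: n => // n IH; rewrite exprS IH //. Qed.

Lemma fin_bound (T : eqType) (s : seq T) (P : T -> nat -> Prop) :
  (forall j, exists L0, forall L, (L0 <= L)%N -> P j L) ->
  exists L0, forall j, j \in s -> forall L, (L0 <= L)%N -> P j L.
Proof.
move=> h; elim: s => [|x s [Ls IH]]; first by exists 0%N.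
have [Lx hx] := h x.
exists (Lx + Ls)%N => j; rewrite inE => /orP [/eqP -> | js] L hL.
  by apply: hx; lia.
by apply: IH => //; lia.
Qed.

Lemma E_bound s h Cst L : 0 < s -> 0 < h -> 1 <= Cst -> s * h * (4 * Cst) <= 1 ->
  exp (- s) ^ L <= (1 - exp (- (s * h))) / (8 * Cst) ->
  Rabs (/ s - (h * (1 - exp (- s) ^ L) / (1 - exp (- (s * h))) - h / 2)) <= h / (4 * Cst).
Proof.
move=> s0 h0 C1 hx hL.
have C0 : 0 < Cst by lra.
have x1 : 0 < s * h <= 1.
  split; first by apply: Rmult_lt_0_compat.
  have : 0 < s * h by apply: Rmult_lt_0_compat.
  nra.
have [[A0 A1] D] := phi_bound (s * h) x1.
set q := exp (- (s * h)) in A0 A1 D hL *.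
set zL := exp (- s) ^ L in hL *.
have zL0 : 0 <= zL by apply: pow_le; apply: Rlt_le; apply: exp_pos.
have Dp : 0 < 1 - q by nra.
set A := / (1 - q) - / (s * h) - / 2 in A0 A1.
set T := zL * / (1 - q).
have T0 : 0 <= T by apply: Rmult_le_pos => //; apply: Rlt_le; apply: Rinv_0_lt_compat.
have T1 : T <= / (8 * Cst).
  rewrite /T. apply: (Rmult_le_reg_r (1 - q)) => //.
  rewrite Rmult_assoc Rinv_l; last by lra.
  move: hL; rewrite /Rdiv; nra.
have eq : / s - (h * (1 - zL) / (1 - q) - h / 2) = h * (T - A).
  rewrite /T /A; field; repeat split; lra.
rewrite eq; apply: Rabs_le.
have e1 : / (8 * Cst) = / (4 * Cst) / 2 by field; lra.
have e2 : (s * h) / 2 <= / (4 * Cst) / 2.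
  apply: Rmult_le_compat_r; first lra.
  apply: (Rmult_le_reg_r (4 * Cst)); first lra.
  rewrite Rinv_l; lra.
have I0 : 0 < / (4 * Cst) by apply: Rinv_0_lt_compat; lra.
rewrite /Rdiv in e1 e2 A1 *; nra.
Qed.

End Key.

Section Key2.
Local Open Scope R_scope.

Lemma sum_ident (L p' : nat) (z q h : R) (c : nat -> R) :
  q ^ p'.+1 = z -> 1 - q <> 0 ->
  \big[Rplus/0]_(k : 'I_L * 'I_p'.+1)
     ((h + (if val k.2 == 0%N then c (val k.1) else 0)) * (z ^ k.1 * q ^ k.2))
  = h * (1 - z ^ L) / (1 - q) + \big[Rplus/0]_(i < L) (c i * z ^ i).
Proof.
move=> hq hq1.
rewrite -(pair_big xpredT xpredT (fun (i : 'I_L) (r : 'I_p'.+1) =>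
   (h + (if val r == 0%N then c (val i) else 0)) * (z ^ i * q ^ r))) /=.
have e : forall i : 'I_L, \big[Rplus/0]_(r < p'.+1)
   ((h + (if val r == 0%N then c (val i) else 0)) * (z ^ i * q ^ r))
   = h * z ^ i * \big[Rplus/0]_(r < p'.+1) q ^ r + c i * z ^ i.
  move=> i; rewrite big_ord_recl /=.
  have -> : \big[Rplus/0]_(i0 < p') ((h + 0) * (z ^ i * (q * q ^ (0 + i0))))
     = h * z ^ i * \big[Rplus/0]_(i0 < p') (q * q ^ (0 + i0)).
    rewrite big_distrr; apply: eq_bigr => r _ /=; ring.
  rewrite [in RHS]big_ord_recl /=. ring.
rewrite (eq_bigr _ (fun i _ => e i)) big_split /=.
f_equal.
have G1 := geom q p'.+1.
have G2 := geom z L.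
rewrite hq in G1.
set Gq := \big[Rplus/0]_(r < p'.+1) q ^ r in G1 *.
set Gz := \big[Rplus/0]_(i < L) z ^ i in G2.
have -> : \big[Rplus/0]_(i < L) (h * z ^ i * Gq) = h * Gq * Gz.
  rewrite big_distrr /=; apply: eq_bigr => i _; ring.
rewrite -G2 -G1; field; exact: hq1.
Qed.

End Key2.

Section Key3.
Local Open Scope R_scope.

Lemma key (S : seq R) : uniq S -> (forall s, s \in S -> 0 < s) ->
  exists (I : finType) (w y : I -> R), (forall k, 0 < w k) /\
    forall s, s \in S -> / s = \big[Rplus/0]_(k : I) (w k * exp (- (y k * s))).
Proof.
move=> uS pS.
pose N := size S.
pose sv (j : 'I_N) := nth 0 S j.
have svS j : sv j \in S by apply: mem_nth; exact: (ltn_ord j).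
have sv0 j : 0 < sv j by apply: pS.
pose z (j : 'I_N) := exp (- sv j).
have zi : injective z.
  move=> j k /exp_inv e; apply/ord_inj/eqP.
  rewrite -(nth_uniq 0 (ltn_ord j) (ltn_ord k) uS); apply/eqP.
  by rewrite /sv in e; rewrite -[LHS]Ropp_involutive e Ropp_involutive.
have [Cst [C0 hint]] := interp zi.
pose C1 := Cst + 1.
have C0r : 0 < Cst by apply/RltP.
have C1ge : 1 <= C1 by rewrite /C1; lra.
pose smax := 1 + \big[Rplus/0]_(j < N) sv j.
have svle j : sv j <= smax.
  rewrite /smax (bigD1 j) //=.
  have : 0 <= \big[Rplus/0]_(i < N | i != j) sv i.
    apply: big_ind => //; [lra | move=> x y; lra | move=> i _; apply: Rlt_le; exact: sv0].
  move=> H; move: H (sv0 j); set T := \big[_/_]_(i < N | i != j) _ => H1 H2; lra.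
have smax0 : 0 < smax.
  have : 0 <= \big[Rplus/0]_(j < N) sv j.
    apply: big_ind => //; [lra | move=> x y; lra | move=> i _; apply: Rlt_le; exact: sv0].
  rewrite /smax; set T := \big[_/_]_(j < N) _ => H1; lra.
have [p hp] := INR_unbounded (4 * C1 * smax).
case: p hp => [|p'] hp; first by rewrite /= in hp; nra.
pose h := / INR p'.+1.
have Ip : 0 < INR p'.+1 by apply: lt_0_INR; lia.
have h0 : 0 < h by apply: Rinv_0_lt_compat.
have hp1 : INR p'.+1 * h = 1 by rewrite /h; field; lra.
have hx j : sv j * h * (4 * C1) <= 1.
  have := svle j; have := sv0 j => a b.
  apply: (Rmult_le_reg_l (INR p'.+1)) => //.
  have : sv j * h * (4 * C1) * INR p'.+1 = sv j * (4 * C1).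
    have -> : sv j * h * (4 * C1) * INR p'.+1 = sv j * (4 * C1) * (INR p'.+1 * h) by ring.
    rewrite hp1; ring.
  nra.
pose q (j : 'I_N) := exp (- (sv j * h)).
have q1 j : q j < 1.
  rewrite /q -exp_0; apply: exp_increasing.
  have := sv0 j; nra.
have hP : forall j : 'I_N, exists L0, forall L, (L0 <= L)%N ->
     exp (- sv j) ^ L <= (1 - q j) / (8 * C1).
  move=> j.
  have a1 : Rabs (exp (- sv j)) < 1.
    rewrite Rabs_pos_eq; last by apply: Rlt_le; apply: exp_pos.
    rewrite -exp_0; apply: exp_increasing; have := sv0 j; lra.
  have a2 : 0 < (1 - q j) / (8 * C1).
    apply: Rdiv_lt_0_compat; [have := q1 j; lra | lra].
  have [L0 hL] := pow_lt_1_zero (exp (- sv j)) a1 _ a2.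
  exists L0 => L hL'; have := hL L (elimT ssrnat.leP hL').
  move=> /(Rle_lt_trans _ _ _ (Rle_abs _)); lra.
have [L0 hL0] := fin_bound _ (enum 'I_N)
   (fun j L => exp (- sv j) ^ L <= (1 - q j) / (8 * C1)) hP.
pose L := (L0 + N)%N.
pose E (j : 'I_N) := / sv j - (h * (1 - exp (- sv j) ^ L) / (1 - q j) - h / 2).
have Eb j : Rabs (E j) <= h / (4 * C1).
  apply: E_bound; [exact: sv0 | exact: h0 | exact: C1ge | exact: hx | ].
  apply: (hL0 j); [exact: mem_enum | rewrite /L; lia].
have [a [ha hb]] := hint E.
have ab i : (i < N)%N -> Rabs (a i) <= h / 4.
  move=> iN.
  have B0r : 0 <= h / (4 * C1) by apply: Rlt_le; apply: Rdiv_lt_0_compat; lra.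
  have B0 := introT RleP B0r.
  have := hb _ B0 (fun j => (introT RleP (Eb j))) i iN => /RleP hh.
  apply: (Rle_trans _ _ _ hh).
  have : Cst * (h / (4 * C1)) <= C1 * (h / (4 * C1)).
    apply: Rmult_le_compat_r; [apply: Rlt_le; apply: Rdiv_lt_0_compat; lra | rewrite /C1; lra].
  have -> : C1 * (h / (4 * C1)) = h / 4 by field; lra.
  done.
pose c (i : nat) := (- (if i == 0%N then h / 2 else 0)) + (if (i < N)%N then a i else 0).
exists ('I_L * 'I_p'.+1)%type.
exists (fun k : 'I_L * 'I_p'.+1 => h + (if val k.2 == 0%N then c (val k.1) else 0)).
exists (fun k : 'I_L * 'I_p'.+1 => INR k.1 + INR k.2 * h).
split.
  move=> [i r] /=; case: (val r == 0%N); last lra.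
  rewrite /c; case: (val i == 0%N); case: (ltnP (val i) N) => iN.
  - have := ab i iN; have := Rle_abs (a i); have := Rle_abs (- a i); rewrite Rabs_Ropp; lra.
  - lra.
  - have := ab i iN; have := Rle_abs (a i); have := Rle_abs (- a i); rewrite Rabs_Ropp; lra.
  - lra.
move=> s sS.
have lS : (index s S < N)%N by rewrite index_mem.
pose l := Ordinal lS.
have svl : sv l = s by rewrite /sv /= nth_index.
have s0 := pS s sS.
have e : forall k : 'I_L * 'I_p'.+1,
    (h + (if val k.2 == 0%N then c k.1 else 0)) * exp (- ((INR k.1 + INR k.2 * h) * s))
  = (h + (if val k.2 == 0%N then c k.1 else 0)) * (exp (- s) ^ k.1 * exp (- (s * h)) ^ k.2).
  move=> [i r] /=; f_equal; rewrite -!exp_nat_mul -exp_plus; f_equal; ring.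
rewrite (eq_bigr _ (fun k _ => e k)).
have hq : exp (- (s * h)) ^ p'.+1 = exp (- s).
  rewrite -exp_nat_mul; f_equal.
  have -> : INR p'.+1 * (s * h) = s * (INR p'.+1 * h) by ring.
  rewrite hp1; ring.
have hq1 : 1 - exp (- (s * h)) <> 0.
  have : exp (- (s * h)) < 1.
    rewrite -exp_0; apply: exp_increasing.
    have : 0 < s * h by apply: Rmult_lt_0_compat.
    lra.
  lra.
rewrite (@sum_ident L p' (exp (- s)) (exp (- (s * h))) h c hq hq1).
have NL : (N <= L)%N by rewrite /L leq_addl.
have N0 : (0 < N)%N by apply: leq_ltn_trans (ltn_ord l).
have ha' : \big[Rplus/0]_(i < N) (a i * exp (- s) ^ i) = E l.
  rewrite -(ha l); apply: eq_bigr => i _; rewrite exprE /z svl //.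
have hc : \big[Rplus/0]_(i < L) (c i * exp (- s) ^ i)
    = - (h / 2) + \big[Rplus/0]_(i < N) (a i * exp (- s) ^ i).
  rewrite /c.
  rewrite (eq_bigr (fun i : 'I_L => (- (if val i == 0%N then h / 2 else 0)) * exp (- s) ^ i
      + (if (val i < N)%N then a i * exp (- s) ^ i else 0))); last first.
    by move=> i _ /=; case: ((val i < N)%N); ring.
  rewrite big_split /=; f_equal.
    have LL : (0 < L)%N by apply: leq_trans NL.
    rewrite (bigD1 (Ordinal LL)) //= big1; first ring.
    move=> i /= hi; case: eqP => [hi0|_]; last ring.
    by move: hi; have -> : i = Ordinal LL by apply: ord_inj.
  rewrite (big_ord_widen L (fun i : nat => a i * exp (- s) ^ i) NL) [RHS]big_mkcond.
  by apply: eq_bigr.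
rewrite hc ha' /E /q svl; lra.
Qed.

End Key3.

Section Basics.
Local Open Scope R_scope.

Lemma sum_const_R m (a : R) : \big[Rplus/0]_(k < m) a = INR m * a.
Proof.
elim: m => [|m IH]; first by rewrite big_ord0 /=; ring.
by rewrite S_INR big_ord_recr /= IH; ring.
Qed.

Lemma prod_const_R m (a : R) : \big[Rmult/1]_(k < m) a = a ^ m.
Proof.
elim: m => [|m IH]; first by rewrite big_ord0.
by rewrite big_ord_recr /= IH; ring.
Qed.

Lemma sum_ge0 (I : finType) (P : pred I) (F : I -> R) :
  (forall i, P i -> 0 <= F i) -> 0 <= \big[Rplus/0]_(i | P i) F i.
Proof. move=> h; apply: big_ind => //; [lra | move=> x y; lra]. Qed.

Lemma prod_ge0 (I : finType) (P : pred I) (F : I -> R) :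
  (forall i, P i -> 0 <= F i) -> 0 <= \big[Rmult/1]_(i | P i) F i.
Proof. move=> h; apply: big_ind => //; [lra | move=> x y; nra]. Qed.

Lemma sum_le (I : finType) (P : pred I) (F G : I -> R) :
  (forall i, P i -> F i <= G i) ->
  \big[Rplus/0]_(i | P i) F i <= \big[Rplus/0]_(i | P i) G i.
Proof. move=> h; apply: (big_ind2 (fun a b => a <= b)) => //; [lra | move=> *; lra]. Qed.

Lemma prod_le (I : finType) (P : pred I) (F G : I -> R) :
  (forall i, P i -> 0 <= F i <= G i) ->
  0 <= \big[Rmult/1]_(i | P i) F i <= \big[Rmult/1]_(i | P i) G i.
Proof.
move=> h; apply: (big_ind2 (fun a b => 0 <= a <= b)) => //; first lra.
move=> x1 x2 y1 y2 [? ?] [? ?]; split; nra.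
Qed.

Lemma sum_pos m (F : 'I_m -> R) : (0 < m)%N -> (forall k, 0 < F k) ->
  0 < \big[Rplus/0]_(k < m) F k.
Proof.
case: m F => [|m] F // _ h; rewrite big_ord_recl /=.
have := @sum_ge0 _ (fun k : 'I_m => true) (fun k => F (lift ord0 k)) (fun k _ => Rlt_le _ _ (h _)).
have := h ord0; set T := \big[_/_]_(k < m | _) _; lra.
Qed.

Lemma pow_lt_strict (a b : R) m : 0 <= a < b -> (0 < m)%N -> a ^ m < b ^ m.
Proof.
move=> hab; elim: m => [|m IH] // _.
case: m IH => [|m] IH; first by rewrite /=; lra.
have := IH isT; have := pow_le a m.+1 (proj1 hab).
have -> : a ^ m.+2 = a * a ^ m.+1 by [].
have -> : b ^ m.+2 = b * b ^ m.+1 by [].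
move=> h1 h2; nra.
Qed.

Lemma pow_even_ge0 (a : R) k : ~~ odd k -> 0 <= a ^ k.
Proof.
move=> hk; rewrite -[k]odd_double_half (negbTE hk) add0n -mul2n.
rewrite pow_mult; apply: pow_le; nra.
Qed.

Lemma pow_even_gt0 (a : R) k : ~~ odd k -> a <> 0 -> 0 < a ^ k.
Proof.
move=> hk ha; rewrite -[k]odd_double_half (negbTE hk) add0n -mul2n.
rewrite pow_mult; apply: pow_lt.
have : 0 < a * a by case: (Rlt_or_le a 0) => h; nra.
by rewrite /=; lra.
Qed.

Lemma inv_nonneg_pos (x : R) : 0 <= / x -> x <> 0 -> 0 < x.
Proof.
move=> h nz; case: (Rlt_or_le 0 x) => // hx.
have hx' : x < 0 by lra.
have := Rinv_lt_0_compat x hx'; lra.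
Qed.

End Basics.

Section Tens.
Local Open Scope R_scope.
Variables (m n : nat).

Definition cidx (i : 'I_n) : {ffun 'I_m -> 'I_n} := [ffun _ => i].

Lemma idx_sum_const (c : vec n) i : idx_sum c (cidx i) = INR m * c i.
Proof.
rewrite /idx_sum -sum_const_R; apply: eq_bigr => k _; by rewrite ffunE.
Qed.

Definition evec (i : 'I_n) : vec n := fun j => if j == i then 1 else 0.

Lemma prod_evec i (idx : {ffun 'I_m -> 'I_n}) :
  \big[Rmult/1]_(k < m) evec i (idx k) = if idx == cidx i then 1 else 0.
Proof.
case: eqP => [->|ne].
  by rewrite big1 // => k _; rewrite /evec ffunE eqxx.
case: (pickP (fun k => idx k != i)) => [k hk | hall].
  by rewrite (bigD1 k) //= /evec (negbTE hk); ring.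
exfalso; apply: ne; apply/ffunP => k; rewrite ffunE.
by have := hall k => /= /negbFE /eqP.
Qed.

Lemma tpow_evec (A : tensor m n) i : tpow A (evec i) = A (cidx i).
Proof.
rewrite /tpow (bigD1 (cidx i)) //= prod_evec eqxx big1.
  ring.
by move=> idx /negbTE hi; rewrite prod_evec hi; ring.
Qed.

Lemma tpow_zero (A : tensor m n) : (0 < m)%N -> tpow A (fun _ => 0) = 0.
Proof.
move=> hm; rewrite /tpow big1 // => idx _.
case: m A idx hm => [|m'] // A idx _.
rewrite big_ord_recl; ring.
Qed.

End Tens.

Section Tpow1.
Local Open Scope R_scope.

Lemma tpow1_cp m' n (A : tensor m'.+1 n) r (u : 'I_r -> vec n) (x : vec n) (i : 'I_n) :
  (forall idx, A idx = \big[Rplus/0]_(k < r) rank_one m'.+1 (u k) idx) ->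
  tpow1 A x i = \big[Rplus/0]_(k < r) (u k i * (\big[Rplus/0]_(l < n) (u k l * x l)) ^ m').
Proof.
move=> hA; rewrite /tpow1 big_mkcond /=.
pose H (k : 'I_r) (j : 'I_m'.+1) (l : 'I_n) :=
  if val j == 0%N then (if l == i then u k l else 0) else u k l * x l.
have step : forall idx : {ffun 'I_m'.+1 -> 'I_n},
   (if [forall k, (val k == 0%N) ==> (idx k == i)]
    then A idx * \big[Rmult/1]_(k < m'.+1 | val k != 0%N) x (idx k) else 0)
   = \big[Rplus/0]_(k < r) \big[Rmult/1]_(j < m'.+1) H k j (idx j).
  move=> idx.
  have hP : [forall k, (val k == 0%N) ==> (idx k == i)] = (idx ord0 == i).
    apply/forallP/idP => [h|h k]; first by have := h ord0.
    apply/implyP => /eqP k0; have -> : k = ord0 by apply: ord_inj.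
    done.
  rewrite hP.
  have hx : \big[Rmult/1]_(k < m'.+1 | val k != 0%N) x (idx k)
          = \big[Rmult/1]_(j < m') x (idx (lift ord0 j)).
    by rewrite big_mkcond big_ord_recl /= Rmult_1_l.
  rewrite hx hA /rank_one.
  case: eqP => [e|ne].
    rewrite big_distrl /=; apply: eq_bigr => k _.
    rewrite !big_ord_recl /H /= e eqxx.
    rewrite big_split /=; ring.
  rewrite big1 // => k _.
  by rewrite big_ord_recl /H /= (introF eqP ne) Rmult_0_l.
rewrite (eq_bigr _ (fun idx _ => step idx)) exchange_big /=.
apply: eq_bigr => k _.
rewrite -(bigA_distr_bigA (fun j l => H k j l)) /= big_ord_recl.
f_equal.
  rewrite /H /= (bigD1 i) //= eqxx big1 ?Rplus_0_r // => l /negbTE ->.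
  done.
rewrite -prod_const_R; apply: eq_bigr => j _.
by apply: eq_bigr => l _; rewrite /H /=.
Qed.

End Tpow1.

Section Eig.
Local Open Scope R_scope.

Lemma eig_nonneg m n (A : tensor m n) r (u : 'I_r -> vec n) lam : (0 < m)%N ->
  (forall k i, 0 <= u k i) ->
  (forall idx, A idx = \big[Rplus/0]_(k < r) rank_one m (u k) idx) ->
  H_eigenvalue A lam -> 0 <= lam.
Proof.
case: m A => [|m'] A // _ hu heq [x [[i0 hi0] heig]].
have e i := @tpow1_cp m' n A r u x i heq.
have em : (m'.+1 - 1 = m')%N by rewrite subn1.
rewrite em in heig.
set d := fun k => \big[Rplus/0]_(l < n) (u k l * x l) in e.
case: (boolP (odd m')) => ho.
  have S1 : \big[Rplus/0]_(i < n) (x i * tpow1 A x i) = \big[Rplus/0]_(k < r) (d k ^ m'.+1).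
    rewrite (eq_bigr (fun i => \big[Rplus/0]_(k < r) (x i * u k i * d k ^ m'))); last first.
      by move=> i _; rewrite e big_distrr /=; apply: eq_bigr => k _ /=; rewrite /d Rmult_assoc.
    rewrite exchange_big /=; apply: eq_bigr => k _.
    rewrite (eq_bigr (fun i => (u k i * x i) * d k ^ m')); last by move=> i _; ring.
    by rewrite -big_distrl /=.
  have S2 : \big[Rplus/0]_(i < n) (x i * tpow1 A x i) = lam * \big[Rplus/0]_(i < n) (x i ^ m'.+1).
    rewrite big_distrr /=; apply: eq_bigr => i _; rewrite heig /=; ring.
  have P1 : 0 <= \big[Rplus/0]_(k < r) (d k ^ m'.+1).
    by apply: sum_ge0 => k _; apply: pow_even_ge0; rewrite /= ho.
  have ho' : ~~ odd m'.+1 by rewrite /= ho.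
  have P2 : 0 < \big[Rplus/0]_(i < n) (x i ^ m'.+1).
    rewrite (bigD1 i0) //=.
    have := @sum_ge0 _ (fun i => i != i0) (fun i => x i ^ m'.+1)
      (fun i _ => @pow_even_ge0 (x i) (m'.+1) ho').
    have := @pow_even_gt0 (x i0) (m'.+1) ho' hi0.
    set T := \big[_/_]_(i < n | _) _.
    have e1 : x i0 ^ m'.+1 = x i0 * x i0 ^ m' by [].
    rewrite -e1; lra.
  rewrite S1 in S2.
  case: (Rlt_or_le lam 0) => // hl.
  have : lam * \big[Rplus/0]_(i < n) (x i ^ m'.+1) < 0 by nra.
  lra.
have h1 := heig i0.
have P1 : 0 <= tpow1 A x i0.
  rewrite e; apply: sum_ge0 => k _; apply: Rmult_le_pos; [exact: hu | exact: pow_even_ge0].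
have P2 := @pow_even_gt0 (x i0) m' ho hi0.
case: (Rlt_or_le lam 0) => // hl.
have : lam * x i0 ^ m' < 0 by nra.
lra.
Qed.

End Eig.

Section MainProof.
Local Open Scope R_scope.

Lemma prod_exp (I : finType) (F : I -> R) :
  \big[Rmult/1]_(j : I) exp (F j) = exp (\big[Rplus/0]_(j : I) F j).
Proof.
apply: (big_ind2 (fun a b => a = exp b)); first by rewrite exp_0.
  by move=> x1 x2 y1 y2 -> ->; rewrite exp_plus.
done.
Qed.

Lemma rank_one_exp m n (c : vec n) (al be : R) (idx : {ffun 'I_m -> 'I_n}) : (0 < m)%N ->
  \big[Rmult/1]_(j < m) exp (al / INR m - be * c (idx j))
  = exp al * exp (- (be * idx_sum c idx)).
Proof.
move=> hm; rewrite prod_exp -exp_plus; f_equal.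
rewrite (eq_bigr (fun j => al / INR m + (- be) * c (idx j))); last by move=> j _; ring.
rewrite big_split /= sum_const_R -big_distrr /= /idx_sum.
have : 0 < INR m by apply: lt_0_INR; apply/ssrnat.ltP.
move=> h; set T := \big[_/_]_(i < m) _; field; lra.
Qed.

Variables (m n : nat) (c : vec n).
Hypothesis hm : (2 <= m)%N.
Hypothesis hc : cauchy_generating m c.

Let m0 : (0 < m)%N. Proof. by apply: leq_trans hm. Qed.
Let Im : 0 < INR m. Proof. by apply: lt_0_INR; apply/ssrnat.ltP. Qed.

Lemma pos_of_diag i : 0 <= cauchy_tensor m c (@cidx m n i) -> 0 < c i.
Proof.
rewrite /cauchy_tensor idx_sum_const => h.
have hci := (proj1 hc) i.
have : 0 < INR m * c i.
  apply: inv_nonneg_pos => //.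
  apply: Rmult_integral_contrapositive; split => //; lra.
nra.
Qed.

Lemma cp_pos : completely_positive (cauchy_tensor m c) -> forall i, 0 < c i.
Proof.
move=> [r [u [hu heq]]] i; apply: pos_of_diag.
rewrite heq; apply: sum_ge0 => k _; apply: prod_ge0 => j _; exact: hu.
Qed.

Lemma evec_nonneg i : nonneg_vec (@evec n i).
Proof. move=> j; rewrite /evec; case: eqP => _; lra. Qed.

Lemma evec_nz i : exists j, @evec n i j <> 0.
Proof. exists i; rewrite /evec eqxx; lra. Qed.

Lemma sc_pos : strictly_copositive (cauchy_tensor m c) -> forall i, 0 < c i.
Proof.
move=> h i; apply: pos_of_diag.
have := h _ (evec_nonneg i) (evec_nz i); rewrite tpow_evec; lra.
Qed.

Lemma inc_pos : strictly_increasing_on_nonneg (cauchy_tensor m c) -> forall i, 0 < c i.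
Proof.
move=> h i; apply: pos_of_diag.
have := h _ (fun _ => 0) (evec_nonneg i) (fun _ => Rle_refl 0) (evec_nonneg i).
rewrite tpow_evec (tpow_zero _ m0).
move=> H; apply: Rlt_le; apply: H.
have [j hj] := evec_nz i; exists j; lra.
Qed.

Lemma dnn_pos : doubly_nonnegative (cauchy_tensor m c) -> forall i, 0 < c i.
Proof. by move=> [h _] i; apply: pos_of_diag. Qed.

Lemma Cpos : (forall i, 0 < c i) -> forall idx, 0 < cauchy_tensor m c idx.
Proof.
move=> cp idx; apply: Rinv_0_lt_compat; apply: sum_pos; [exact: m0 | move=> k; exact: cp].
Qed.

Lemma pos_inc : (forall i, 0 < c i) -> strictly_increasing_on_nonneg (cauchy_tensor m c).
Proof.
move=> cp x y hx hy hyx [i0 hi0].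
rewrite /tpow (bigD1 (@cidx m n i0)) //= [X in _ < X](bigD1 (@cidx m n i0)) //=.
apply: Rplus_lt_le_compat.
  apply: Rmult_lt_compat_l; first exact: Cpos.
  rewrite (eq_bigr (fun _ => y i0)); last by move=> k _; rewrite ffunE.
  rewrite [X in _ < X](eq_bigr (fun _ => x i0)); last by move=> k _; rewrite ffunE.
  rewrite !prod_const_R; apply: pow_lt_strict; last exact: m0.
  have := hy i0; have := hyx i0; lra.
apply: sum_le => idx _; apply: Rmult_le_compat_l; first exact: Rlt_le (Cpos cp idx).
have H := @prod_le _ (fun _ => true) (fun k : 'I_m => y (idx k)) (fun k => x (idx k))
  (fun k _ => conj (hy _) (hyx _)).
exact: (proj2 H).
Qed.

Lemma inc_sc : strictly_increasing_on_nonneg (cauchy_tensor m c) -> strictly_copositive (cauchy_tensor m c).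
Proof.
move=> h x hx [i hi].
rewrite -(tpow_zero (cauchy_tensor m c) m0).
apply: h; [exact: hx | move=> j; lra | move=> j; apply: hx | exists i => /=; exact: hi].
Qed.

Lemma pos_cp : (forall i, 0 < c i) -> completely_positive (cauchy_tensor m c).
Proof.
move=> cp.
pose S := undup [seq idx_sum c idx | idx <- enum {ffun 'I_m -> 'I_n}].
have memS (idx : {ffun 'I_m -> 'I_n}) : idx_sum c idx \in S by rewrite mem_undup; apply/mapP; exists idx; rewrite ?mem_enum.
have posS : forall s, s \in S -> 0 < s.
  move=> s; rewrite mem_undup => /mapP [idx _ ->].
  apply: sum_pos; [exact: m0 | move=> k; exact: cp].
have [I [w [y [wpos hS]]]] := @key S (undup_uniq _) posS.
exists #|I|.
exists (fun k l => exp (ln (w (enum_val k)) / INR m - y (enum_val k) * c l)).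
split; first by move=> k l; apply: Rlt_le; apply: exp_pos.
move=> idx; rewrite /cauchy_tensor (hS _ (memS idx)).
have -> : \big[Rplus/0]_(k : I) (w k * exp (- (y k * idx_sum c idx)))
  = \big[Rplus/0]_(k < #|I|) (w (enum_val k) * exp (- (y (enum_val k) * idx_sum c idx))).
  rewrite -(big_enum_val (fun k : I => w k * exp (- (y k * idx_sum c idx)))).
  by apply: eq_bigl => x; rewrite inE.
apply: eq_bigr => k _; rewrite /rank_one rank_one_exp; last exact: m0.
by rewrite exp_ln.
Qed.

Lemma pos_dnn : (forall i, 0 < c i) -> doubly_nonnegative (cauchy_tensor m c).
Proof.
move=> cp; split; first by move=> idx; apply: Rlt_le; apply: Cpos.
move=> lam hl.
have [r [u [hu heq]]] := pos_cp cp.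
exact: (@eig_nonneg m n _ r u lam m0 hu heq hl).
Qed.

End MainProof.

Theorem mainTheorem17 (m n : nat) (c : 'I_n -> R)
  (hm : (2 <= m)%N) (hc : cauchy_generating m c) :
  [<-> completely_positive (cauchy_tensor m c);
       strictly_copositive (cauchy_tensor m c);
       (forall i : 'I_n, Rlt 0 (c i));
       strictly_increasing_on_nonneg (cauchy_tensor m c);
       doubly_nonnegative (cauchy_tensor m c)].
Proof.
have P03 := @cp_pos m n c hm hc.
have P13 := @sc_pos m n c hm hc.
have P33 := @inc_pos m n c hm hc.
have P43 := @dnn_pos m n c hm hc.
have Q0 := @pos_cp m n c hm.
have Q3 := @pos_inc m n c hm.
have Q4 := @pos_dnn m n c hm.
have I1 := @inc_sc m n c hm.
tfae.
- by move=> h; apply: I1; apply: Q3; apply: P03.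
- exact: P13.
- exact: Q3.
- by move=> h; apply: Q4; apply: P33.
- by move=> h; apply: Q0; apply: P43.
Qed.
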